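(* Let $\mathcal{H}$ be a finite family of rooted digraphs, $D$ a digraph, $k$ an integer and $W\subseteq V(D)$ an $\mathcal{H}$-deletion set of $D$ of size at most $k+1$. Then $D$ has an $\mathcal{H}$-deletion set of size at most $k$ disjoint from $W$ if and only if there exists an ordered partition $\mathcal{S}=(S_1,\ldots,S_q)$ of $W$ such that the instance $(D,\mathcal{S},W,k)$ has a nice solution.
   Context: Subgraphs are not necessarily induced; strong components are maximal sets of mutually reachable vertices. A digraph $F$ is rooted if some vertex of $F$ reaches all vertices of $F$ in $F$; for each such $F$ one such vertex is fixed canonically and denoted $r(F)$ (its root). $X\subseteq V(D)$ is an $\mathcal{H}$-deletion set of $D$ if no strong component of $D-X$ contains a subgraph isomorphic to a graph in $\mathcal{H}$. For $A\subseteq V(D)$ and $Y\subseteq V(D)$, $R(A,Y)$ denotes the set of vertices reachable by a directed path from a vertex of $A$ in $D-Y$. Given an ordered partition $\mathcal{S}=(S_1,\dots,S_q)$ of $W$, a solution for $(D,\mathcal{S},W,k)$ is a set $X\subseteq V(D)$ with $|X|\le k$, $X\cap W=\emptyset$, $X$ an $\mathcal{H}$-deletion set of $D$, and $X$ intersecting every directed $S_i$-$S_j$ path in $D$ for all $i<j$. A solution $X$ is nice if for every subgraph $F\subseteq D$ isomorphic to a graph in $\mathcal{H}$ and every $i\in[q]$, at least one holds: (1) $X\cap V(F)\neq\emptyset$; (2) $r(F)\notin R(S_i,X)$; (3) there is $v\in V(F)$ such that $D-X$ has no directed path from $v$ to $S_i$. *)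

(* Defs.v *)
From mathcomp Require Import all_boot all_order all_algebra.
Set Implicit Arguments. Unset Strict Implicit. Unset Printing Implicit Defensive.

Record digraph := Digraph { dvert : finType ; darc : rel dvert }.

Definition rooted (H : digraph) : Prop :=
  exists r : dvert H, forall v : dvert H, connect (@darc H) r v.

Fixpoint in_family (H : digraph) (Hs : seq digraph) : Prop :=
  if Hs is H' :: Hs' then H' = H \/ in_family H Hs' else False.

Section DefsD.
Variables (V : finType) (E : rel V).

(* x reaches y by a directed path of D all of whose vertices lie in U
   (i.e. a path in D[U]; with U = ~: X this is reachability in D - X). *)
Definition reach_in (U : {set V}) (x y : V) : bool :=
  (x \in U) && connect [rel a b | [&& a \in U, b \in U & E a b]] x y.

Definition mutually_reachable (U : {set V}) (C : {set V}) : bool :=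
  [forall x in C, forall y in C, reach_in U x y].

Definition strong_component (U : {set V}) (C : {set V}) : bool :=
  maxset (mutually_reachable U) C.

(* (A, B) is a (not necessarily induced) subgraph of D[U]:
   vertex set A inside U, arc set B made of arcs of D between vertices of A. *)
Definition is_subgraph (U : {set V}) (A : {set V}) (B : {set V * V}) : Prop :=
  A \subset U /\ forall x y, (x, y) \in B -> [/\ x \in A, y \in A & E x y].

Definition iso_to (H : digraph) (A : {set V}) (B : {set V * V}) : Prop :=
  exists f : dvert H -> V,
    [/\ injective f, f @: setT = A &
        forall u v, darc u v = ((f u, f v) \in B)].

Definition iso_to_family (Hs : seq digraph) (A : {set V}) (B : {set V * V}) : Prop :=
  exists H, in_family H Hs /\ iso_to H A B.

Definition rooted_sub (A : {set V}) (B : {set V * V}) : Prop :=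
  exists r, r \in A /\ forall v, v \in A -> connect [rel x y | (x, y) \in B] r v.

Definition root_choice (rt : {set V} -> {set V * V} -> V) : Prop :=
  forall A B, is_subgraph setT A B -> rooted_sub A B ->
    rt A B \in A /\ forall v, v \in A -> connect [rel x y | (x, y) \in B] (rt A B) v.

Definition deletion_set (Hs : seq digraph) (X : {set V}) : Prop :=
  forall C, strong_component (~: X) C ->
    ~ (exists A B, is_subgraph C A B /\ iso_to_family Hs A B).

Definition R (A Y : {set V}) : {set V} :=
  [set v | [exists a in A, reach_in (~: Y) a v]].

Definition ordered_partition (W : {set V}) (S : seq {set V}) : Prop :=
  [/\ forall A, A \in S -> A != set0,
      forall i j, (i < j < size S)%N -> [disjoint nth set0 S i & nth set0 S j]
    & \bigcup_(A <- S) A = W].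

Definition separates (S : seq {set V}) (X : {set V}) : Prop :=
  forall i j, (i < j < size S)%N ->
    forall s p, s \in nth set0 S i -> path E s p -> last s p \in nth set0 S j ->
      exists2 v, v \in s :: p & v \in X.

Definition solution (Hs : seq digraph) (S : seq {set V}) (W : {set V}) (k : int)
    (X : {set V}) : Prop :=
  [/\ (#|X|%:Z <= k)%R, [disjoint X & W], deletion_set Hs X & separates S X].

Definition nice_solution (Hs : seq digraph) (rt : {set V} -> {set V * V} -> V)
    (S : seq {set V}) (W : {set V}) (k : int) (X : {set V}) : Prop :=
  solution Hs S W k X /\
  forall A B, is_subgraph setT A B -> iso_to_family Hs A B ->
    forall i, (i < size S)%N ->
      [\/ X :&: A != set0,
          rt A B \notin R (nth set0 S i) X
        | exists2 v, v \in A & ~~ [exists s in nth set0 S i, reach_in (~: X) v s]].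

End DefsD.

(* Main.v *)
Require Import Defs.
From mathcomp Require Import all_boot all_order all_algebra.

Set Implicit Arguments. Unset Strict Implicit. Unset Printing Implicit Defensive.

Lemma connect_map (T1 T2 : finType) (e1 : rel T1) (e2 : rel T2) (f : T1 -> T2) :
  (forall x y, e1 x y -> e2 (f x) (f y)) ->
  forall x y, connect e1 x y -> connect e2 (f x) (f y).
Proof.
move=> h x y /connectP [p pp ->]; elim: p x pp => [|z p IH] x /=.
  by rewrite connect0.
case/andP=> exz pp; exact: connect_trans (connect1 (h _ _ exz)) (IH _ pp).
Qed.

Section Main.
Variables (V : finType) (E : rel V) (X : {set V}).
Local Notation U := (~: X).
Local Notation reach := (reach_in E U).

Lemma reach_trans x y z : reach x y -> reach y z -> reach x z.
Proof.
rewrite /reach_in => /andP [xU cxy] /andP [_ cyz].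
by rewrite xU (connect_trans cxy cyz).
Qed.

Lemma reach_refl x : x \in U -> reach x x.
Proof. by move=> xU; rewrite /reach_in xU connect0. Qed.

Lemma path_reach s p : path E s p -> ~~ has (mem X) (s :: p) -> reach s (last s p).
Proof.
elim: p s => [|z p IH] s /=.
  by move=> _; rewrite orbF => sX; apply: reach_refl; rewrite inE.
case/andP=> Esz pp; rewrite negb_or => /andP [sX nh].
have := IH z pp nh; rewrite /reach_in => /andP [zU c].
have sU : s \in U by rewrite inE.
rewrite sU; apply: connect_trans c; apply: connect1; by rewrite /= sU zU Esz.
Qed.

Definition eqv x y := reach x y && reach y x.

Lemma eqv_trans x y z : eqv x y -> eqv y z -> eqv x z.
Proof.
case/andP=> a b /andP [c d]; apply/andP; split; [exact: reach_trans a c|exact: reach_trans d b].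
Qed.

Lemma eqv_sym x y : eqv x y -> eqv y x.
Proof. by case/andP=> a b; apply/andP. Qed.

End Main.

Theorem lemma8 (V : finType) (E : rel V) (Hs : seq digraph)
    (rt : {set V} -> {set V * V} -> V) (k : int) (W : {set V}) :
  (forall H, in_family H Hs -> rooted H) ->
  root_choice E rt ->
  deletion_set E Hs W ->
  (#|W|%:Z <= k + 1)%R ->
  (exists X : {set V}, [/\ (#|X|%:Z <= k)%R, deletion_set E Hs X & [disjoint X & W]])
  <->
  (exists S : seq {set V}, ordered_partition W S /\
     exists X : {set V}, nice_solution E Hs rt S W k X).
Proof.
move=> Hroot Hrc _ _; split; last first.
  by case=> S [_ [X [[hk hd hdel hsep] _]]]; exists X; split.
case=> X [hk hdel hdis].
have WU : forall w, w \in W -> w \in ~: X.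
  by move=> w wW; rewrite inE (disjointFl hdis wW).
pose cls w := [set x in W | eqv E X w x].
have cls_eq : forall a b, eqv E X a b -> cls a = cls b.
  move=> a b ab; apply/setP=> x; rewrite !inE; case: (x \in W) => //=.
  apply/idP/idP => h; [exact: eqv_trans (eqv_sym ab) h | exact: eqv_trans ab h].
have cls_self : forall w, w \in W -> w \in cls w.
  by move=> w wW; rewrite inE wW /eqv reach_refl ?WU.
pose leT := fun A B : {set V} => (#|R E A X| <= #|R E B X|)%N.
pose L := sort leT (undup [seq cls w | w <- enum W]).
have memL : forall A, A \in L -> exists2 w, w \in W & A = cls w.
  move=> A; rewrite mem_sort mem_undup => /mapP [w]; rewrite mem_enum => wW ->.
  by exists w.
have clsL : forall w, w \in W -> cls w \in L.
  by move=> w wW; rewrite mem_sort mem_undup; apply: map_f; rewrite mem_enum.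
have uL : uniq L by rewrite sort_uniq undup_uniq.
have sL : sorted leT L by apply: sort_sorted => A B; apply: leq_total.
have neq : forall i j, (i < j < size L)%N -> nth set0 L i != nth set0 L j.
  move=> i j /andP [ij jL]; rewrite nth_uniq //; last exact: ltn_trans ij jL.
  by rewrite neq_ltn ij.
exists L; split.
  split.
  - move=> A /memL [w wW ->]; apply/set0Pn; exists w; exact: cls_self.
  - move=> i j hij; have := neq _ _ hij; case/andP: hij => ij jL.
    have iL : (i < size L)%N by exact: ltn_trans ij jL.
    case: (memL _ (mem_nth set0 iL)) => wi _ ->.
    case: (memL _ (mem_nth set0 jL)) => wj _ -> ne.
    rewrite -setI_eq0; apply/set0Pn => [[x]]; rewrite !inE => /andP [/andP [_ hi] /andP [_ hj]].
    by move: ne; rewrite (cls_eq _ _ (eqv_trans hi (eqv_sym hj))) eqxx.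
  - rewrite bigcup_seq; apply/setP => x; apply/bigcupP/idP.
      by case=> A /memL [w _ ->]; rewrite inE => /andP [].
    by move=> xW; exists (cls x); [exact: clsL | exact: cls_self].
exists X; split.
  split => //.
  move=> i j hij s p sLi pp tLj.
  case: (boolP (has (mem X) (s :: p))) => [/hasP [v vin vX] | nh].
    by exists v.
  exfalso.
  have rst := path_reach pp nh.
  have ne := neq _ _ hij; case/andP: hij => ij jL.
  have iL : (i < size L)%N by exact: ltn_trans ij jL.
  have le : leT (nth set0 L i) (nth set0 L j).
    have leT_tr : transitive leT by move=> a b c; apply: leq_trans.
    have leT_rf : reflexive leT by move=> a; apply: leqnn.
    apply: (sorted_leq_nth leT_tr leT_rf set0 sL); [exact: iL | exact: jL | exact: ltnW].
  move: sLi tLj ne le.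
  case: (memL _ (mem_nth set0 iL)) => wi _ ->.
  case: (memL _ (mem_nth set0 jL)) => wj _ ->.
  set t := last s p.
  rewrite !inE => /andP [sW eis] /andP [tW ejt] ne le.
  have sub : R E (cls wj) X \subset R E (cls wi) X.
    apply/subsetP => v; rewrite !inE => /existsP [a /andP [aC av]].
    apply/existsP; exists s; rewrite inE sW eis /=.
    move: aC; rewrite inE => /andP [_ eja].
    apply: reach_trans av; apply: reach_trans rst _.
    case/andP: ejt => _ tj; apply: reach_trans tj _; by case/andP: eja.
  have sin : s \in R E (cls wi) X.
    rewrite inE; apply/existsP; exists s; rewrite inE sW eis /=.
    exact: reach_refl (WU _ sW).
  have snot : s \notin R E (cls wj) X.
    rewrite inE; apply/existsP => [[a /andP [aC ras]]].
    move: aC; rewrite inE => /andP [_ eja].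
    have ets : eqv E X t s.
      apply/andP; split; last exact: rst.
      case/andP: ejt => _ tj; apply: reach_trans tj _.
      apply: reach_trans ras; by case/andP: eja.
    have eij : eqv E X wi wj.
      apply: eqv_trans eis _; apply: eqv_trans (eqv_sym ets) _; exact: eqv_sym ejt.
    by move: ne; rewrite (cls_eq _ _ eij) eqxx.
  have : (#|R E (cls wj) X| < #|R E (cls wi) X|)%N.
    by apply: proper_card; apply/properP; split => //; exists s.
  by move=> lt; move: le; rewrite /leT leqNgt lt.
move=> A B hsub hiso i iL.
case: (memL _ (mem_nth set0 iL)) => w0 w0W Si.
rewrite Si.
case: (boolP (X :&: A != set0)) => [h|]; first by constructor 1.
rewrite negbK => /eqP XA0.
case: (boolP (rt A B \in R E (cls w0) X)) => [rR|h]; last by constructor 2.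
case: (boolP [forall v in A, [exists s in cls w0, reach_in E (~: X) v s]]); last first.
  move/forallPn => [v]; rewrite negb_imply => /andP [vA nv].
  by constructor 3; exists v.
move=> allr; exfalso.
have AU : forall v, v \in A -> v \in ~: X.
  move=> v vA; rewrite inE; apply/negP => vX.
  have : v \in X :&: A by rewrite inE vX vA.
  by rewrite XA0 inE.
have hrs : rooted_sub A B.
  case: hiso => H [inH [f [finj fA fd]]].
  case: (Hroot _ inH) => r hr.
  exists (f r); split; first by rewrite -fA; apply: imset_f.
  move=> v; rewrite -fA => /imsetP [u _ ->].
  apply: (connect_map (e1 := @darc H)) => // x y; by rewrite fd.
case: (Hrc _ _ hsub hrs) => rtA rtc.
pose C := [set v | eqv E X w0 v].
have AC : A \subset C.
  apply/subsetP => v vA; rewrite inE; apply/andP; split.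
    move: rR; rewrite inE => /existsP [a /andP [aC ar]].
    move: aC; rewrite inE => /andP [_ /andP [w0a _]].
    apply: reach_trans w0a _; apply: reach_trans ar _.
    rewrite /reach_in AU //=.
    apply: connect_sub (rtc _ vA) => x y /= xyB.
    case: (hsub.2 _ _ xyB) => xA yA Exy.
    by apply: connect1; rewrite /= !AU.
  have /forallP /(_ v) := allr; rewrite vA /= => /existsP [s /andP [sC vs]].
  move: sC; rewrite inE => /andP [_ /andP [_ sw0]].
  exact: reach_trans vs sw0.
have sc : strong_component E (~: X) C.
  apply/maxsetP; split.
    apply/forallP => x; apply/implyP; rewrite inE => ex.
    apply/forallP => y; apply/implyP; rewrite inE => ey.
    by case/andP: (eqv_trans (eqv_sym ex) ey).
  move=> D mD CD; apply/eqP; rewrite eqEsubset; apply/andP; split; last exact: CD.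
  have w0D : w0 \in D.
    by apply: (subsetP CD); rewrite inE /eqv reach_refl ?WU.
  apply/subsetP => b bD; rewrite inE; apply/andP; split.
    by have /forallP /(_ w0) := mD; rewrite w0D /= => /forallP /(_ b); rewrite bD.
  by have /forallP /(_ b) := mD; rewrite bD /= => /forallP /(_ w0); rewrite w0D.
apply: (hdel C sc); exists A, B; split => //; split => //; exact: hsub.2.
Qed.
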